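(* Let $H$ be the system defined in the context, and suppose the underlying graph is complete on $N\ge 2$ nodes (every pair $i\neq k$ joined by an edge with susceptance $b_{ik}>0$). Let $\underline{b}$ be the arithmetic mean of the $N(N-1)/2$ edge susceptances and $b_{\min}=\min_{i\ne k}b_{ik}$. Then $$\frac{\alpha}{2}(N-1)\left(\frac{1}{k_P}+\frac{1}{\tau_Q\left(\frac{c_Q}{Nb_{\min}}+k_Q\right)}\right)\ \le\ \|H\|_2^2\ \le\ \frac{\alpha}{2}(N-1)\left(\frac{1}{k_P}+\frac{1}{\tau_Q\left(\frac{c_Q}{N\underline{b}}+k_Q\right)}\right),$$ and if all $b_{ik}$ are equal both inequalities are equalities.
   Context: $L_B$ is the weighted Laplacian of the graph with edge weights $b_{ik}$. Parameters: $k_P,\tau_P,k_Q,\tau_Q>0$, $\bar b\ge 0$, $c_Q=1+2k_Q\bar b$, $\alpha>0$. $H$ is the LTI system with state $\psi=(\delta,\omega,V)\in\mathbb{R}^{3N}$, input $\mathrm{w}\in\mathbb{R}^{2N}$, output $y$: $$\dot\psi=\begin{bmatrix}0 & I & 0\\ -\frac{k_P}{\tau_P}L_B & -\frac{1}{\tau_P}I & 0\\ 0 & 0 & -\frac{c_Q}{\tau_Q}I-\frac{k_Q}{\tau_Q}L_B\end{bmatrix}\psi+\begin{bmatrix}0&0\\ \frac{1}{\tau_P}I & 0\\ 0 & \frac{1}{\tau_Q}I\end{bmatrix}\mathrm{w},\qquad y=\begin{bmatrix}\sqrt{\alpha}L_B^{1/2} & 0 & 0\\ 0&0&\sqrt{\alpha}L_B^{1/2}\end{bmatrix}\psi,$$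 and $\|H\|_2^2$ is the squared $\mathcal{H}_2$ norm of its transfer function (finite since the single zero mode is unobservable and all other modes are stable). *)

(* Defs.v *)
From Stdlib Require Export Reals List Arith.
Export ListNotations.
Open Scope R_scope.

Definition fsum (n : nat) (f : nat -> R) : R :=
  fold_right Rplus 0 (map f (seq 0 n)).

(* Matrices are functions nat -> nat -> R; dimensions are tracked explicitly. *)
Definition mat := nat -> nat -> R.

Definition idm (i j : nat) : R := if Nat.eqb i j then 1 else 0.

(* Weighted Laplacian (N x N) of the graph with edge weights b i k, i <> k
   (the diagonal values b i i are ignored). *)
Definition lap (N : nat) (b : mat) : mat := fun i k =>
  if Nat.eqb i k then fsum N (fun j => if Nat.eqb j i then 0 else b i j)
  else - b i k.

Definition pairs (N : nat) : list (nat * nat) :=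
  filter (fun p => Nat.ltb (fst p) (snd p)) (list_prod (seq 0 N) (seq 0 N)).

Definition edge_weights (N : nat) (b : mat) : list R :=
  map (fun p => b (fst p) (snd p)) (pairs N).

Definition bmin (N : nat) (b : mat) : R :=
  match edge_weights N b with
  | [] => 0
  | x :: l => fold_right Rmin x l
  end.

Definition bmean (N : nat) (b : mat) : R :=
  fold_right Rplus 0 (edge_weights N b) / (INR N * (INR N - 1) / 2).

(* State psi = (delta, omega, V): indices 0..N-1, N..2N-1, 2N..3N-1.
   Input w = (w_P, w_Q): indices 0..N-1, N..2N-1.
   Output y: indices 0..N-1 (delta part), N..2N-1 (V part). *)
Definition Asys (N : nat) (b : mat) (kP tauP kQ tauQ cQ : R) : mat := fun i j =>
  let L := lap N b in
  let ri := Nat.modulo i N in let rj := Nat.modulo j N in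
  match Nat.div i N, Nat.div j N with
  | 0%nat, 1%nat => idm ri rj
  | 1%nat, 0%nat => - (kP / tauP) * L ri rj
  | 1%nat, 1%nat => - (1 / tauP) * idm ri rj
  | 2%nat, 2%nat => - (cQ / tauQ) * idm ri rj - (kQ / tauQ) * L ri rj
  | _, _ => 0
  end.

Definition Bsys (N : nat) (tauP tauQ : R) : mat := fun i j =>
  let ri := Nat.modulo i N in let rj := Nat.modulo j N in
  match Nat.div i N, Nat.div j N with
  | 1%nat, 0%nat => (1 / tauP) * idm ri rj
  | 2%nat, 1%nat => (1 / tauQ) * idm ri rj
  | _, _ => 0
  end.

(* S plays the role of L_B^{1/2}. *)
Definition Csys (N : nat) (alpha : R) (S : mat) : mat := fun i j =>
  let ri := Nat.modulo i N in let rj := Nat.modulo j N in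
  match Nat.div i N, Nat.div j N with
  | 0%nat, 0%nat => sqrt alpha * S ri rj
  | 1%nat, 2%nat => sqrt alpha * S ri rj
  | _, _ => 0
  end.

Definition is_psd_sqrt (n : nat) (S M : mat) : Prop :=
  (forall i j, (i < n)%nat -> (j < n)%nat -> S i j = S j i) /\
  (forall x : nat -> R, 0 <= fsum n (fun i => fsum n (fun j => x i * S i j * x j))) /\
  (forall i j, (i < n)%nat -> (j < n)%nat -> fsum n (fun k => S i k * S k j) = M i j).

(* Phi is the state-transition matrix exp(A t) (n x n): Phi 0 = I, Phi' = A Phi. *)
Definition is_transition (n : nat) (A : mat) (Phi : R -> mat) : Prop :=
  (forall i j, (i < n)%nat -> (j < n)%nat -> Phi 0 i j = idm i j) /\
  (forall t i j, (i < n)%nat -> (j < n)%nat ->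
     derivable_pt_lim (fun s => Phi s i j) t (fsum n (fun k => A i k * Phi t k j))).

Definition impulse (n : nat) (C : mat) (Phi : R -> mat) (B : mat) (t : R) : mat :=
  fun i j => fsum n (fun k => fsum n (fun l => C i k * Phi t k l * B l j)).

Definition has_integral_0_inf (g : R -> R) (v : R) : Prop :=
  forall eps, 0 < eps -> exists M, forall T, M <= T ->
    exists pr : Riemann_integrable g 0 T, Rabs (RiemannInt pr - v) < eps.

Definition H2_norm_sq (n m p : nat) (A B C : mat) (Phi : R -> mat) (v : R) : Prop :=
  has_integral_0_inf
    (fun t => fsum p (fun i => fsum m (fun j => (impulse n C Phi B t i j) ^ 2))) v.

(* Main.v *)
Require Import Defs.
From Stdlib Require Import Reals Lra Lia Psatz FunctionalExtensionality Classical.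
From Coquelicot Require Import Coquelicot.
Open Scope R_scope.


Lemma fold_Rplus_acc (a : R) (l : list R) : fold_right Rplus a l = a + fold_right Rplus 0 l.
Proof. induction l; simpl; [lra|rewrite IHl; lra]. Qed.

Lemma fsum_0 f : fsum 0 f = 0.
Proof. reflexivity. Qed.

Lemma fsum_S n f : fsum (S n) f = fsum n f + f n.
Proof.
  unfold fsum. rewrite seq_S, map_app, fold_right_app. simpl.
  rewrite fold_Rplus_acc. lra.
Qed.

Lemma fsum_ext n f g : (forall i, (i < n)%nat -> f i = g i) -> fsum n f = fsum n g.
Proof.
  induction n; intros H; [reflexivity|]. rewrite !fsum_S, IHn, H; [reflexivity|lia|intros; apply H; lia].
Qed.

Lemma fsum_plus n f g : fsum n (fun i => f i + g i) = fsum n f + fsum n g.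
Proof. induction n; [unfold fsum; simpl; lra|]. rewrite !fsum_S, IHn. lra. Qed.

Lemma fsum_scal n c f : fsum n (fun i => c * f i) = c * fsum n f.
Proof. induction n; [unfold fsum; simpl; lra|]. rewrite !fsum_S, IHn. lra. Qed.

Lemma fsum_opp n f : fsum n (fun i => - f i) = - fsum n f.
Proof. induction n; [unfold fsum; simpl; lra|]. rewrite !fsum_S, IHn. lra. Qed.

Lemma fsum_minus n f g : fsum n (fun i => f i - g i) = fsum n f - fsum n g.
Proof. induction n; [unfold fsum; simpl; lra|]. rewrite !fsum_S, IHn. lra. Qed.

Lemma fsum_const n c : fsum n (fun _ => c) = INR n * c.
Proof. induction n; [unfold fsum; simpl; lra|]. rewrite !fsum_S, IHn, S_INR. lra. Qed.

Lemma fsum_zero n : fsum n (fun _ => 0) = 0.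
Proof. rewrite fsum_const; lra. Qed.

Lemma fsum_le n f g : (forall i, (i < n)%nat -> f i <= g i) -> fsum n f <= fsum n g.
Proof.
  induction n; intros H; [unfold fsum; simpl; lra|]. rewrite !fsum_S.
  assert (f n <= g n) by (apply H; lia).
  assert (fsum n f <= fsum n g) by (apply IHn; intros; apply H; lia). lra.
Qed.

Lemma fsum_nonneg n f : (forall i, (i < n)%nat -> 0 <= f i) -> 0 <= fsum n f.
Proof. intros H. rewrite <- (fsum_zero n). apply fsum_le. auto. Qed.

Lemma fsum_swap n m (f : nat -> nat -> R) :
  fsum n (fun i => fsum m (fun j => f i j)) = fsum m (fun j => fsum n (fun i => f i j)).
Proof.
  induction n; simpl.
  - rewrite fsum_zero. reflexivity.
  - rewrite fsum_S, IHn, <- fsum_plus. apply fsum_ext. intros. rewrite fsum_S. reflexivity.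
Qed.

Lemma fsum_add n m f : fsum (n + m) f = fsum n f + fsum m (fun i => f (n + i)%nat).
Proof.
  induction m.
  - rewrite Nat.add_0_r, fsum_0. lra.
  - rewrite Nat.add_succ_r, !fsum_S, IHm. lra.
Qed.

Lemma fsum_delta n k f : (k < n)%nat -> fsum n (fun l => if Nat.eqb k l then f l else 0) = f k.
Proof.
  induction n; intros Hk; [lia|]. rewrite fsum_S.
  destruct (Nat.eq_dec k n).
  - subst. rewrite Nat.eqb_refl. rewrite (fsum_ext _ _ (fun _ => 0)).
    + rewrite fsum_zero. lra.
    + intros i Hi. destruct (Nat.eqb_spec n i); [lia|reflexivity].
  - rewrite IHn by lia. destruct (Nat.eqb_spec k n); [lia|lra].
Qed.

Lemma fsum_delta' n k f : (k < n)%nat -> fsum n (fun l => if Nat.eqb l k then f l else 0) = f k.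
Proof.
  intros. rewrite <- (fsum_delta n k f) by auto. apply fsum_ext. intros.
  rewrite Nat.eqb_sym. reflexivity.
Qed.

Lemma fsum_mult_sq n f g : fsum n f * fsum n g = fsum n (fun i => fsum n (fun j => f i * g j)).
Proof.
  rewrite Rmult_comm, <- fsum_scal. apply fsum_ext; intros.
  rewrite Rmult_comm, <- fsum_scal. apply fsum_ext; intros. lra.
Qed.

Lemma fsum_derive n (f : R -> nat -> R) (df : nat -> R) t :
  (forall i, (i < n)%nat -> derivable_pt_lim (fun s => f s i) t (df i)) ->
  derivable_pt_lim (fun s => fsum n (f s)) t (fsum n df).
Proof.
  induction n; intros H.
  - simpl. apply derivable_pt_lim_const.
  - rewrite fsum_S. 
    apply (derivable_pt_lim_ext (fun s => fsum n (f s) + f s n)).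
    { intros; rewrite fsum_S; reflexivity. }
    apply derivable_pt_lim_plus; [apply IHn; intros; apply H; lia| apply H; lia].
Qed.


Section Quad.
Variable N : nat.
Variable L : mat.
Hypothesis HN : (1 <= N)%nat.
Hypothesis Lsym : forall i k, (i < N)%nat -> (k < N)%nat -> L i k = L k i.
Hypothesis Lrow : forall i, (i < N)%nat -> fsum N (fun k => L i k) = 0.

Definition dot (u w : nat -> R) := fsum N (fun i => u i * w i).
Definition sm (u : nat -> R) := fsum N u.
Definition Lv (u : nat -> R) (i : nat) := fsum N (fun k => L i k * u k).
Definition Lq (u w : nat -> R) := dot u (Lv w).
Definition Pq (u w : nat -> R) := dot u w - sm u * sm w / INR N.

Lemma INR_N_pos : 0 < INR N.
Proof. apply lt_0_INR. lia. Qed.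

Lemma dot_sym u w : dot u w = dot w u.
Proof. unfold dot. apply fsum_ext; intros; lra. Qed.

Lemma dot_lin2 u p x q y : dot u (fun i => p * x i + q * y i) = p * dot u x + q * dot u y.
Proof.
  unfold dot. rewrite <- !fsum_scal, <- fsum_plus. apply fsum_ext; intros; lra.
Qed.

Lemma sm_lin p x q y : sm (fun i => p * x i + q * y i) = p * sm x + q * sm y.
Proof.
  unfold sm. rewrite <- !fsum_scal, <- fsum_plus. apply fsum_ext; intros; lra.
Qed.

Lemma Lv_lin p x q y i : Lv (fun k => p * x k + q * y k) i = p * Lv x i + q * Lv y i.
Proof.
  unfold Lv. rewrite <- !fsum_scal, <- fsum_plus. apply fsum_ext; intros; lra.
Qed.

Lemma Lq_sym u w : Lq u w = Lq w u.
Proof.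
  unfold Lq, dot, Lv.
  transitivity (fsum N (fun i => fsum N (fun k => u i * L i k * w k))).
  { apply fsum_ext; intros. rewrite <- fsum_scal. apply fsum_ext; intros; lra. }
  rewrite fsum_swap. apply fsum_ext; intros k Hk.
  rewrite <- fsum_scal. apply fsum_ext; intros i Hi. rewrite (Lsym i k) by auto. lra.
Qed.

Lemma sm_Lv u : sm (Lv u) = 0.
Proof.
  unfold sm, Lv. rewrite fsum_swap.
  rewrite <- (fsum_zero N). apply fsum_ext; intros k Hk.
  transitivity (u k * fsum N (fun i => L k i)).
  - rewrite <- fsum_scal. apply fsum_ext; intros i Hi. rewrite (Lsym i k) by auto. lra.
  - rewrite Lrow by auto. lra.
Qed.

Lemma Pq_sym u w : Pq u w = Pq w u.
Proof. unfold Pq. rewrite dot_sym. lra. Qed.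

Lemma Pq_lin2 u p x q y : Pq u (fun i => p * x i + q * y i) = p * Pq u x + q * Pq u y.
Proof.
  unfold Pq. rewrite dot_lin2, sm_lin. pose proof INR_N_pos. field. lra.
Qed.

Lemma Pq_Lv u w : Pq u (Lv w) = Lq u w.
Proof. unfold Pq, Lq. rewrite sm_Lv. pose proof INR_N_pos. field. lra. Qed.

Lemma Pq_centered u w :
  fsum N (fun i => (u i - sm u / INR N) * (w i - sm w / INR N)) = Pq u w.
Proof.
  pose proof INR_N_pos.
  transitivity (fsum N (fun i => u i * w i) + (- (sm w / INR N)) * fsum N u
     + (- (sm u / INR N)) * fsum N w + fsum N (fun _ => sm u / INR N * (sm w / INR N))).
  - rewrite <- !fsum_scal, <- !fsum_plus. apply fsum_ext; intros; ring.
  - rewrite fsum_const. unfold Pq, dot. fold (sm u) (sm w). field. lra.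
Qed.


Lemma Pq_form_nonneg u w s t : 0 <= s * s * Pq u u + 2 * s * t * Pq u w + t * t * Pq w w.
Proof.
  rewrite <- !Pq_centered.
  replace (s * s * fsum N (fun i => (u i - sm u / INR N) * (u i - sm u / INR N)) +
     2 * s * t * fsum N (fun i => (u i - sm u / INR N) * (w i - sm w / INR N)) +
     t * t * fsum N (fun i => (w i - sm w / INR N) * (w i - sm w / INR N)))
   with (fsum N (fun i => (s * (u i - sm u / INR N) + t * (w i - sm w / INR N))^2)).
  - apply fsum_nonneg; intros. apply pow2_ge_0.
  - rewrite <- !fsum_scal, <- !fsum_plus. apply fsum_ext; intros; ring.
Qed.

Lemma Pq_nonneg u : 0 <= Pq u u.
Proof. pose proof (Pq_form_nonneg u u 1 0). lra. Qed.

End Quad.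


Section Lap.
Variable N : nat.
Variable b : mat.
Hypothesis HN : (1 <= N)%nat.
Hypothesis bsym : forall i k, (i < N)%nat -> (k < N)%nat -> b i k = b k i.

Definition b' (i k : nat) := if Nat.eqb k i then 0 else b i k.

Lemma b'_sym i k : (i < N)%nat -> (k < N)%nat -> b' i k = b' k i.
Proof.
  intros. unfold b'. destruct (Nat.eqb_spec k i), (Nat.eqb_spec i k); try lia; auto.
Qed.

Lemma lap_sym i k : (i < N)%nat -> (k < N)%nat -> lap N b i k = lap N b k i.
Proof.
  intros. unfold lap. destruct (Nat.eqb_spec i k), (Nat.eqb_spec k i); try lia.
  - subst; reflexivity.
  - rewrite bsym; auto.
Qed.

Lemma lap_row_form i u : (i < N)%nat ->
  fsum N (fun k => lap N b i k * u k) = fsum N (fun k => b' i k * (u i - u k)).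
Proof.
  intros Hi. unfold lap.
  transitivity (fsum N (fun k => if Nat.eqb i k then fsum N (fun j => b' i j) * u k else 0)
      + fsum N (fun k => - (b' i k * u k))).
  - rewrite <- fsum_plus. apply fsum_ext; intros k Hk. unfold b'.
    destruct (Nat.eqb_spec i k), (Nat.eqb_spec k i); try lia; try lra.
  - rewrite fsum_delta by auto. rewrite fsum_opp.
    rewrite (fsum_ext N (fun k => b' i k * (u i - u k)) (fun k => u i * b' i k - b' i k * u k)) by (intros; ring).
    rewrite fsum_minus, fsum_scal. replace (fsum N (b' i)) with (fsum N (fun j => b' i j)) by reflexivity; ring.
Qed.

Lemma lap_rowsum i : (i < N)%nat -> fsum N (fun k => lap N b i k) = 0.
Proof.
  intros Hi. transitivity (fsum N (fun k => lap N b i k * 1)).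
  { apply fsum_ext; intros; lra. }
  rewrite lap_row_form by auto. rewrite <- (fsum_zero N). apply fsum_ext; intros; lra.
Qed.

Lemma lap_diag i : (i < N)%nat -> lap N b i i = fsum N (fun k => b' i k).
Proof. intros. unfold lap. rewrite Nat.eqb_refl. reflexivity. Qed.

Lemma Lq_pairs u :
  2 * Lq N (lap N b) u u = fsum N (fun i => fsum N (fun k => b' i k * (u i - u k)^2)).
Proof.
  assert (E : Lq N (lap N b) u u = fsum N (fun i => fsum N (fun k => b' i k * (u i * (u i - u k))))).
  { unfold Lq, dot, Lv. apply fsum_ext; intros i Hi. rewrite lap_row_form by auto.
    rewrite <- fsum_scal. apply fsum_ext; intros; lra. }
  assert (E2 : Lq N (lap N b) u u = fsum N (fun i => fsum N (fun k => b' i k * (u k * (u k - u i))))).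
  { rewrite E, fsum_swap. apply fsum_ext; intros k Hk. apply fsum_ext; intros i Hi.
    rewrite b'_sym by auto. reflexivity. }
  replace (2 * Lq N (lap N b) u u) with (Lq N (lap N b) u u + Lq N (lap N b) u u) by lra.
  rewrite E at 1. rewrite E2, <- fsum_plus. apply fsum_ext; intros.
  rewrite <- fsum_plus. apply fsum_ext; intros. ring.
Qed.

Lemma double_diff u :
  fsum N (fun i => fsum N (fun k => (u i - u k)^2)) = 2 * INR N * Pq N u u.
Proof.
  pose proof (INR_N_pos N HN).
  transitivity (fsum N (fun i => INR N * (u i * u i) + (-2 * u i) * fsum N u + dot N u u)).
  - apply fsum_ext; intros. rewrite <- fsum_const, <- fsum_scal.
    unfold dot. rewrite <- !fsum_plus. apply fsum_ext; intros. ring.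
  - rewrite !fsum_plus, fsum_scal, fsum_const.
    rewrite (fsum_ext N (fun i => -2 * u i * fsum N u) (fun i => (-2 * fsum N u) * u i)) by (intros; ring).
    rewrite fsum_scal. unfold Pq, dot, sm. field. lra.
Qed.

Lemma Lq_lower u m : (forall i k, (i < N)%nat -> (k < N)%nat -> i <> k -> m <= b i k) ->
  INR N * m * Pq N u u <= Lq N (lap N b) u u.
Proof.
  intros Hm.
  assert (H2 : m * fsum N (fun i => fsum N (fun k => (u i - u k)^2)) <=
               fsum N (fun i => fsum N (fun k => b' i k * (u i - u k)^2))).
  { rewrite <- fsum_scal. apply fsum_le; intros i Hi. rewrite <- fsum_scal.
    apply fsum_le; intros k Hk. unfold b'. destruct (Nat.eqb_spec k i).
    - subst. replace (u i - u i) with 0 by ring. simpl. lra.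
    - apply Rmult_le_compat_r; [apply pow2_ge_0|]. apply Hm; auto. }
  rewrite <- Lq_pairs, double_diff in H2. lra.
Qed.

Lemma Lq_nonneg u : (forall i k, (i < N)%nat -> (k < N)%nat -> i <> k -> 0 <= b i k) ->
  0 <= Lq N (lap N b) u u.
Proof.
  intros H. pose proof (Lq_lower u 0 H). pose proof (Pq_nonneg N HN u). 
  pose proof (INR_N_pos N HN). nra.
Qed.

End Lap.


Lemma dmult f g x l1 l2 : derivable_pt_lim f x l1 -> derivable_pt_lim g x l2 ->
  derivable_pt_lim (fun s => f s * g s) x (l1 * g x + f x * l2).
Proof. intros; apply (derivable_pt_lim_mult f g); auto. Qed.
Lemma dplus f g x l1 l2 : derivable_pt_lim f x l1 -> derivable_pt_lim g x l2 ->
  derivable_pt_lim (fun s => f s + g s) x (l1 + l2).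
Proof. intros; apply (derivable_pt_lim_plus f g); auto. Qed.
Lemma dscal c f x l : derivable_pt_lim f x l -> derivable_pt_lim (fun s => c * f s) x (c * l).
Proof. intros; apply (derivable_pt_lim_scal f); auto. Qed.
Lemma deq f x l1 l2 : derivable_pt_lim f x l1 -> l1 = l2 -> derivable_pt_lim f x l2.
Proof. intros; subst; auto. Qed.

Section Dyn.
Variable N : nat.
Variable L : mat.
Hypothesis HN : (1 <= N)%nat.
Hypothesis Lsym : forall i k, (i < N)%nat -> (k < N)%nat -> L i k = L k i.
Hypothesis Lrow : forall i, (i < N)%nat -> fsum N (fun k => L i k) = 0.

Lemma dot_derive (u w : R -> nat -> R) du dw t :
  (forall i, (i < N)%nat -> derivable_pt_lim (fun s => u s i) t (du i)) ->
  (forall i, (i < N)%nat -> derivable_pt_lim (fun s => w s i) t (dw i)) ->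
  derivable_pt_lim (fun s => dot N (u s) (w s)) t (dot N du (w t) + dot N (u t) dw).
Proof.
  intros Hu Hw. unfold dot. rewrite <- fsum_plus.
  apply (fsum_derive N (fun s i => u s i * w s i)). intros. apply dmult; auto.
Qed.

Lemma sm_derive (u : R -> nat -> R) du t :
  (forall i, (i < N)%nat -> derivable_pt_lim (fun s => u s i) t (du i)) ->
  derivable_pt_lim (fun s => sm N (u s)) t (sm N du).
Proof. intros. unfold sm. apply (fsum_derive N u). auto. Qed.

Lemma Lv_derive (u : R -> nat -> R) du t i :
  (forall i, (i < N)%nat -> derivable_pt_lim (fun s => u s i) t (du i)) ->
  derivable_pt_lim (fun s => Lv N L (u s) i) t (Lv N L du i).
Proof.
  intros. unfold Lv. apply (fsum_derive N (fun s k => L i k * u s k)). intros.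
  apply dscal; auto.
Qed.

Lemma Pq_derive (u w : R -> nat -> R) du dw t :
  (forall i, (i < N)%nat -> derivable_pt_lim (fun s => u s i) t (du i)) ->
  (forall i, (i < N)%nat -> derivable_pt_lim (fun s => w s i) t (dw i)) ->
  derivable_pt_lim (fun s => Pq N (u s) (w s)) t (Pq N du (w t) + Pq N (u t) dw).
Proof.
  intros Hu Hw. unfold Pq.
  eapply deq.
  - apply (derivable_pt_lim_minus (fun s => dot N (u s) (w s)) (fun s => sm N (u s) * sm N (w s) / INR N)).
    + apply dot_derive; eauto.
    + unfold Rdiv. apply (derivable_pt_lim_mult (fun s => sm N (u s) * sm N (w s)) (fun _ => / INR N)).
      * apply dmult; apply sm_derive; auto.
      * apply derivable_pt_lim_const.
  - simpl. field. pose proof (INR_N_pos N HN). lra.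
Qed.

Lemma Lq_derive (u w : R -> nat -> R) du dw t :
  (forall i, (i < N)%nat -> derivable_pt_lim (fun s => u s i) t (du i)) ->
  (forall i, (i < N)%nat -> derivable_pt_lim (fun s => w s i) t (dw i)) ->
  derivable_pt_lim (fun s => Lq N L (u s) (w s)) t (Lq N L du (w t) + Lq N L (u t) dw).
Proof.
  intros Hu Hw. unfold Lq. apply (dot_derive u (fun s => Lv N L (w s))); auto.
  intros. apply Lv_derive; auto.
Qed.

Variables a c p r : R.
Variables d w v : R -> nat -> R.
Hypothesis D1 : forall t i, (i < N)%nat -> derivable_pt_lim (fun s => d s i) t (w t i).
Hypothesis D2 : forall t i, (i < N)%nat ->
  derivable_pt_lim (fun s => w s i) t (-a * Lv N L (d t) i + -c * w t i).
Hypothesis D3 : forall t i, (i < N)%nat ->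
  derivable_pt_lim (fun s => v s i) t (-p * v t i + -r * Lv N L (v t) i).

Definition qd t := Lq N L (d t) (d t).
Definition Pd t := Pq N (d t) (d t).
Definition Pdw t := Pq N (d t) (w t).
Definition Pw t := Pq N (w t) (w t).
Definition qV t := Lq N L (v t) (v t).
Definition PV t := Pq N (v t) (v t).
Definition rV t := Pq N (Lv N L (v t)) (Lv N L (v t)).

Lemma Lq_lin2 u p1 x q1 y : Lq N L u (fun i => p1 * x i + q1 * y i) = p1 * Lq N L u x + q1 * Lq N L u y.
Proof.
  unfold Lq. rewrite <- dot_lin2. unfold dot. apply fsum_ext; intros. rewrite Lv_lin. reflexivity.
Qed.

Lemma qd_der t : derivable_pt_lim qd t (2 * Lq N L (d t) (w t)).
Proof.
  eapply deq. apply (Lq_derive d d (w t) (w t)); intros; apply D1; auto.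
  rewrite (Lq_sym N L Lsym (w t)). ring.
Qed.

Lemma Pd_der t : derivable_pt_lim Pd t (2 * Pdw t).
Proof.
  eapply deq. apply (Pq_derive d d (w t) (w t)); intros; apply D1; auto.
  unfold Pdw. rewrite (Pq_sym N (w t)). ring.
Qed.

Lemma Pdw_der t : derivable_pt_lim Pdw t (Pw t - a * qd t - c * Pdw t).
Proof.
  eapply deq. apply (Pq_derive d w (w t)); intros; [apply D1|apply D2]; auto.
  rewrite Pq_lin2, Pq_Lv by auto. unfold Pw, qd, Pdw. ring.
Qed.

Lemma Pw_der t : derivable_pt_lim Pw t (-2 * a * Lq N L (d t) (w t) - 2 * c * Pw t).
Proof.
  eapply deq. apply Pq_derive; intros; apply D2; auto.
  rewrite (Pq_sym N _ (w t)), Pq_lin2, Pq_Lv by auto.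
  rewrite (Lq_sym N L Lsym (w t)). unfold Pw. ring.
Qed.

Lemma qV_der t : derivable_pt_lim qV t (-2 * p * qV t - 2 * r * rV t).
Proof.
  eapply deq. apply Lq_derive; intros; apply D3; auto.
  rewrite (Lq_sym N L Lsym _ (v t)), Lq_lin2.
  unfold rV. rewrite Pq_Lv by auto. rewrite (Lq_sym N L Lsym (Lv N L (v t))). unfold qV. ring.
Qed.

Lemma PV_der t : derivable_pt_lim PV t (-2 * p * PV t - 2 * r * qV t).
Proof.
  eapply deq. apply Pq_derive; intros; apply D3; auto.
  rewrite (Pq_sym N _ (v t)), Pq_lin2, Pq_Lv by auto. unfold PV, qV. ring.
Qed.

End Dyn.


Lemma nonincr f df : (forall t, derivable_pt_lim f t (df t)) -> (forall t, 0 <= t -> df t <= 0) ->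
  forall s T, 0 <= s <= T -> f T <= f s.
Proof.
  intros Hd Hn s T [Hs HT].
  destruct (MVT_gen f s T df) as [x [Hx E]].
  - intros. apply is_derive_Reals. apply Hd.
  - intros. apply derivable_continuous_pt. exists (df x). apply Hd.
  - rewrite Rmin_left in Hx by lra. rewrite Rmax_right in Hx by lra.
    assert (df x <= 0) by (apply Hn; lra).
    assert (df x * (T - s) <= 0).
    { apply Rmult_le_0_r; lra. }
    lra.
Qed.

Lemma decay f df k : (forall t, derivable_pt_lim f t (df t)) -> (forall t, 0 <= t -> df t <= - k * f t) ->
  forall T, 0 <= T -> f T <= f 0 * exp (- k * T).
Proof.
  intros Hd Hn T HT.
  set (h := fun s => f s * exp (k * s)).
  assert (Hh : forall t, derivable_pt_lim h t ((df t + k * f t) * exp (k * t))).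
  { intros t. unfold h. eapply deq. apply dmult. apply Hd.
    apply (derivable_pt_lim_comp (fun s => k * s) exp t k (exp (k * t))).
    - eapply deq. apply dscal. apply derivable_pt_lim_id. ring.
    - apply derivable_pt_lim_exp.
    - simpl; ring. }
  pose proof (nonincr h _ Hh) as Hm.
  assert (h T <= h 0).
  { apply Hm; [|lra]. intros t Ht. pose proof (Hn t Ht). pose proof (exp_pos (k * t)).
    apply Rmult_le_0_r; lra. }
  unfold h in H. rewrite Rmult_0_r, exp_0, Rmult_1_r in H.
  replace (f T) with (f T * exp (k * T) * exp (- k * T)).
  - apply Rmult_le_compat_r; [apply Rlt_le, exp_pos|auto].
  - rewrite Rmult_assoc, <- exp_plus. replace (k * T + - k * T) with 0 by ring.
    rewrite exp_0. ring.
Qed.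

Lemma exp_small C k eps : 0 <= C -> 0 < k -> 0 < eps ->
  exists T0, 0 <= T0 /\ forall T, T0 <= T -> C * exp (- k * T) < eps.
Proof.
  intros HC Hk He. exists (C / (k * eps)). split.
  { apply Rmult_le_pos; [auto|]. apply Rlt_le, Rinv_0_lt_compat. nra. }
  intros T HT.
  assert (HT0 : 0 <= T). { assert (0 <= C / (k * eps)). apply Rmult_le_pos; [auto|].
    apply Rlt_le, Rinv_0_lt_compat. nra. lra. }
  assert (E1 : 1 + k * T <= exp (k * T)).
  { destruct (Req_dec T 0). subst. rewrite Rmult_0_r, exp_0. lra.
    apply Rlt_le, exp_ineq1. nra. }
  assert (kT : C <= eps * (k * T)).
  { apply (Rmult_le_compat_l (k * eps)) in HT; [|nra].
    unfold Rdiv in HT. rewrite <- Rmult_assoc, (Rmult_comm (k * eps) C), Rmult_assoc, Rinv_r in HT by nra.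
    nra. }
  replace (- k * T) with (- (k * T)) by ring. rewrite exp_Ropp.
  assert (0 < exp (k * T)) by apply exp_pos.
  apply (Rmult_lt_reg_r (exp (k * T))); auto.
  rewrite Rmult_assoc, Rinv_l by lra. nra.
Qed.

Section FTC.
Variable g : R -> R.
Hypothesis gc : forall t, continuity_pt g t.

Lemma g_exRInt a b0 : ex_RInt g a b0.
Proof.
  apply (@ex_RInt_continuous R_CompleteNormedModule). intros. apply continuity_pt_filterlim. apply gc.
Qed.

Lemma I_der t : derivable_pt_lim (fun T => RInt g 0 T) t (g t).
Proof.
  apply is_derive_Reals. apply (is_derive_RInt g (fun T => RInt g 0 T) 0 t).
  - apply filter_forall. intros. apply (@RInt_correct R_CompleteNormedModule). apply g_exRInt.
  - apply continuity_pt_filterlim. apply gc.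
Qed.

Lemma I_riemann T : 0 <= T -> exists pr : Riemann_integrable g 0 T, RiemannInt pr = RInt g 0 T.
Proof.
  intros HT. exists (continuity_implies_RiemannInt HT (fun x _ => gc x)).
  symmetry. apply RInt_Reals.
Qed.

Lemma I_0 : RInt g 0 0 = 0.
Proof. apply (@RInt_point R_CompleteNormedModule). Qed.

End FTC.


Lemma dm0 N i : (i < N)%nat -> Nat.div i N = 0%nat /\ Nat.modulo i N = i.
Proof.
  intros. split; [symmetry; apply (Nat.div_unique i N 0 i)|symmetry; apply (Nat.mod_unique i N 0 i)]; lia.
Qed.
Lemma dm1 N i : (i < N)%nat -> Nat.div (N + i) N = 1%nat /\ Nat.modulo (N + i) N = i.
Proof.
  intros. split; [symmetry; apply (Nat.div_unique _ N 1 i)|symmetry; apply (Nat.mod_unique _ N 1 i)]; lia.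
Qed.
Lemma dm2 N i : (i < N)%nat -> Nat.div (2 * N + i) N = 2%nat /\ Nat.modulo (2 * N + i) N = i.
Proof.
  intros. split; [symmetry; apply (Nat.div_unique _ N 2 i)|symmetry; apply (Nat.mod_unique _ N 2 i)]; lia.
Qed.

Lemma fsum3 N f : fsum (3 * N) f =
  fsum N (fun r => f r) + fsum N (fun r => f (N + r)%nat) + fsum N (fun r => f (2 * N + r)%nat).
Proof.
  replace (3 * N)%nat with (N + N + N)%nat by lia. rewrite !fsum_add.
  f_equal. apply fsum_ext; intros. f_equal. lia.
Qed.

Lemma fsum2 N f : fsum (2 * N) f = fsum N (fun r => f r) + fsum N (fun r => f (N + r)%nat).
Proof.
  replace (2 * N)%nat with (N + N)%nat by lia. rewrite !fsum_add. reflexivity.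
Qed.

Lemma pow2_mult x y : (x * y) ^ 2 = x * x * (y * y).
Proof. ring. Qed.
Lemma pow2_mult' x y : (x * y) ^ 2 = x ^ 2 * y ^ 2.
Proof. ring. Qed.

Ltac dm_rw :=
  repeat match goal with
  | H : (?i < ?N)%nat |- context [Nat.div (2 * ?N + ?i) ?N] =>
      let h := fresh in destruct (dm2 N i H) as [h ?]; rewrite h; clear h
  | H : (?i < ?N)%nat |- context [Nat.modulo (2 * ?N + ?i) ?N] =>
      let h := fresh in destruct (dm2 N i H) as [? h]; rewrite h; clear h
  | H : (?i < ?N)%nat |- context [Nat.div (?N + ?i) ?N] =>
      let h := fresh in destruct (dm1 N i H) as [h ?]; rewrite h; clear h
  | H : (?i < ?N)%nat |- context [Nat.modulo (?N + ?i) ?N] =>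
      let h := fresh in destruct (dm1 N i H) as [? h]; rewrite h; clear h
  | H : (?i < ?N)%nat |- context [Nat.div ?i ?N] =>
      let h := fresh in destruct (dm0 N i H) as [h ?]; rewrite h; clear h
  | H : (?i < ?N)%nat |- context [Nat.modulo ?i ?N] =>
      let h := fresh in destruct (dm0 N i H) as [? h]; rewrite h; clear h
  end.

Section Bridge.
Variable N : nat.
Variable b : mat.
Variables kP tauP kQ tauQ cQ alpha : R.
Variable S : mat.
Variable Phi : R -> mat.
Hypothesis HN : (1 <= N)%nat.
Hypothesis Htr : is_transition (3 * N) (Asys N b kP tauP kQ tauQ cQ) Phi.

Local Notation A := (Asys N b kP tauP kQ tauQ cQ).
Local Notation B := (Bsys N tauP tauQ).
Local Notation L := (lap N b).

Definition xx (j : nat) (t : R) (k : nat) := fsum (3 * N) (fun l => Phi t k l * B l j).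

Lemma xx_der j t k : (k < 3 * N)%nat ->
  derivable_pt_lim (fun s => xx j s k) t (fsum (3 * N) (fun m => A k m * xx j t m)).
Proof.
  intros Hk. unfold xx.
  eapply deq.
  - apply (fsum_derive (3 * N) (fun s l => Phi s k l * B l j)
       (fun l => fsum (3 * N) (fun m => A k m * Phi t m l) * B l j)).
    intros l Hl. eapply deq. apply (dmult (fun s => Phi s k l) (fun _ => B l j)).
    + destruct Htr as [_ H]. apply H; auto.
    + apply derivable_pt_lim_const.
    + ring.
  - transitivity (fsum (3 * N) (fun l => fsum (3 * N) (fun m => A k m * Phi t m l * B l j))).
    + apply fsum_ext; intros. rewrite Rmult_comm, <- fsum_scal.
      apply fsum_ext; intros; ring.
    + rewrite fsum_swap. apply fsum_ext; intros. rewrite <- fsum_scal. apply fsum_ext; intros; ring.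
Qed.

Definition dd j t i := xx j t i.
Definition ww j t i := xx j t (N + i).
Definition vv j t i := xx j t (2 * N + i).

Lemma dd_der j t i : (i < N)%nat -> derivable_pt_lim (fun s => dd j s i) t (ww j t i).
Proof.
  intros Hi. unfold dd. eapply deq. apply xx_der; lia.
  rewrite fsum3. unfold Asys. cbv zeta. 
  rewrite (fsum_ext N _ (fun _ => 0)).
  2:{ intros r Hr. dm_rw. ring. }
  rewrite (fsum_ext N (fun r => _ * xx j t (2 * N + r)) (fun _ => 0)).
  2:{ intros r Hr. dm_rw. ring. }
  rewrite (fsum_ext N (fun r => _ * xx j t (N + r)) (fun r => if Nat.eqb i r then ww j t r else 0)).
  2:{ intros r Hr. dm_rw. unfold idm. destruct (Nat.eqb i r); unfold ww; ring. }
  rewrite fsum_delta by auto. rewrite !fsum_zero. ring.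
Qed.


Lemma ww_der j t i : (i < N)%nat -> derivable_pt_lim (fun s => ww j s i) t
   (- (kP / tauP) * Lv N L (dd j t) i + - (1 / tauP) * ww j t i).
Proof.
  intros Hi. unfold ww. eapply deq. apply xx_der; lia.
  rewrite fsum3. unfold Asys. cbv zeta.
  rewrite (fsum_ext N (fun r => _ * xx j t (2 * N + r)) (fun _ => 0)).
  2:{ intros r Hr. dm_rw. ring. }
  rewrite (fsum_ext N (fun r => _ * xx j t (N + r)) (fun r => - (1 / tauP) * (if Nat.eqb i r then ww j t r else 0))).
  2:{ intros r Hr. dm_rw. unfold idm. destruct (Nat.eqb i r); unfold ww; ring. }
  rewrite (fsum_ext N (fun r => _ * xx j t r) (fun r => - (kP / tauP) * (L i r * dd j t r))).
  2:{ intros r Hr. dm_rw. unfold dd. ring. }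
  rewrite !fsum_scal, fsum_delta by auto. rewrite fsum_zero. unfold Lv, ww. ring.
Qed.

Lemma vv_der j t i : (i < N)%nat -> derivable_pt_lim (fun s => vv j s i) t
   (- (cQ / tauQ) * vv j t i + - (kQ / tauQ) * Lv N L (vv j t) i).
Proof.
  intros Hi. unfold vv. eapply deq. apply xx_der; lia.
  rewrite fsum3. unfold Asys. cbv zeta.
  rewrite (fsum_ext N (fun r => _ * xx j t (2 * N + r))
     (fun r => - (cQ / tauQ) * (if Nat.eqb i r then vv j t r else 0) + - (kQ / tauQ) * (L i r * vv j t r))).
  2:{ intros r Hr. dm_rw. unfold idm. destruct (Nat.eqb i r); unfold vv; ring. }
  rewrite (fsum_ext N (fun r => _ * xx j t (N + r)) (fun _ => 0)).
  2:{ intros r Hr. dm_rw. ring. }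
  rewrite (fsum_ext N (fun r => _ * xx j t r) (fun _ => 0)).
  2:{ intros r Hr. dm_rw. ring. }
  rewrite fsum_plus, !fsum_scal, fsum_delta by auto. rewrite fsum_zero. unfold Lv, vv. ring.
Qed.

Lemma xx_0 j k : (k < 3 * N)%nat -> xx j 0 k = B k j.
Proof.
  intros Hk. unfold xx. destruct Htr as [H0 _].
  rewrite (fsum_ext _ _ (fun l => if Nat.eqb k l then B l j else 0)).
  - apply (fsum_delta (3 * N) k (fun l => B l j)); auto.
  - intros l Hl. rewrite H0 by auto. unfold idm. destruct (Nat.eqb k l); ring.
Qed.

(* initial values: P-columns j < N, Q-columns N + j *)
Lemma init_P j i : (j < N)%nat -> (i < N)%nat ->
  dd j 0 i = 0 /\ ww j 0 i = (1 / tauP) * idm i j /\ vv j 0 i = 0.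
Proof.
  intros Hj Hi. unfold dd, ww, vv. rewrite !xx_0 by lia. unfold Bsys. cbv zeta.
  dm_rw. split; [reflexivity|split; [reflexivity|reflexivity]].
Qed.

Lemma init_Q j i : (j < N)%nat -> (i < N)%nat ->
  dd (N + j) 0 i = 0 /\ ww (N + j) 0 i = 0 /\ vv (N + j) 0 i = (1 / tauQ) * idm i j.
Proof.
  intros Hj Hi. unfold dd, ww, vv. rewrite !xx_0 by lia. unfold Bsys. cbv zeta.
  dm_rw. split; [reflexivity|split; [reflexivity|reflexivity]].
Qed.


Hypothesis Halpha : 0 <= alpha.
Hypothesis Ssym : forall i j, (i < N)%nat -> (j < N)%nat -> S i j = S j i.
Hypothesis Ssq : forall i j, (i < N)%nat -> (j < N)%nat -> fsum N (fun k => S i k * S k j) = L i j.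
Local Notation C := (Csys N alpha S).

Lemma imp_xx t i j : impulse (3 * N) C Phi B t i j = fsum (3 * N) (fun k => C i k * xx j t k).
Proof.
  unfold impulse, xx. apply fsum_ext; intros. rewrite <- fsum_scal. apply fsum_ext; intros. ring.
Qed.

Lemma imp_row0 t i j : (i < N)%nat ->
  impulse (3 * N) C Phi B t i j = sqrt alpha * fsum N (fun r => S i r * dd j t r).
Proof.
  intros Hi. rewrite imp_xx, fsum3. unfold Csys. cbv zeta.
  rewrite (fsum_ext N (fun r => _ * xx j t (2 * N + r)) (fun _ => 0)).
  2:{ intros r Hr. dm_rw. ring. }
  rewrite (fsum_ext N (fun r => _ * xx j t (N + r)) (fun _ => 0)).
  2:{ intros r Hr. dm_rw. ring. }
  rewrite (fsum_ext N (fun r => _ * xx j t r) (fun r => sqrt alpha * (S i r * dd j t r))).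
  2:{ intros r Hr. dm_rw. unfold dd. ring. }
  rewrite fsum_scal, fsum_zero. ring.
Qed.

Lemma imp_row1 t i j : (i < N)%nat ->
  impulse (3 * N) C Phi B t (N + i)%nat j = sqrt alpha * fsum N (fun r => S i r * vv j t r).
Proof.
  intros Hi. rewrite imp_xx, fsum3. unfold Csys. cbv zeta.
  rewrite (fsum_ext N (fun r => _ * xx j t (2 * N + r)) (fun r => sqrt alpha * (S i r * vv j t r))).
  2:{ intros r Hr. dm_rw. unfold vv. ring. }
  rewrite (fsum_ext N (fun r => _ * xx j t (N + r)) (fun _ => 0)).
  2:{ intros r Hr. dm_rw. ring. }
  rewrite (fsum_ext N (fun r => _ * xx j t r) (fun _ => 0)).
  2:{ intros r Hr. dm_rw. ring. }
  rewrite fsum_scal, fsum_zero. ring.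
Qed.

Lemma Ssq_form u : fsum N (fun i => (fsum N (fun r => S i r * u r))^2) = Lq N L u u.
Proof.
  transitivity (fsum N (fun i => fsum N (fun r => fsum N (fun s => u r * (S r i * S i s) * u s)))).
  - apply fsum_ext; intros i Hi. replace ((fsum N (fun r => S i r * u r))^2) with (fsum N (fun r => S i r * u r) * fsum N (fun r => S i r * u r)) by ring. rewrite fsum_mult_sq. apply fsum_ext; intros r Hr.
    apply fsum_ext; intros s Hs. rewrite (Ssym r i) by auto. ring.
  - rewrite fsum_swap. unfold Lq, dot, Lv. apply fsum_ext; intros r Hr.
    rewrite fsum_swap. rewrite <- fsum_scal. apply fsum_ext; intros s Hs.
    rewrite <- Ssq by auto.
    rewrite (fsum_ext N _ (fun i => (u r * u s) * (S r i * S i s))) by (intros; ring).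
    rewrite fsum_scal. ring.
Qed.

Lemma integrand t :
  fsum (2 * N) (fun i => fsum (2 * N) (fun j => (impulse (3 * N) C Phi B t i j) ^ 2)) =
  fsum (2 * N) (fun j => alpha * (Lq N L (dd j t) (dd j t) + Lq N L (vv j t) (vv j t))).
Proof.
  rewrite fsum_swap. apply fsum_ext; intros j Hj. rewrite fsum2.
  rewrite (fsum_ext N (fun r => (impulse _ _ _ _ t r j)^2) (fun r => alpha * (fsum N (fun s => S r s * dd j t s))^2)).
  2:{ intros. rewrite imp_row0 by auto. rewrite pow2_mult', pow2_sqrt by auto. reflexivity. }
  rewrite (fsum_ext N (fun r => (impulse _ _ _ _ t (N + r)%nat j)^2) (fun r => alpha * (fsum N (fun s => S r s * vv j t s))^2)).
  2:{ intros. rewrite imp_row1 by auto. rewrite pow2_mult', pow2_sqrt by auto. reflexivity. }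
  rewrite !fsum_scal, !Ssq_form. ring.
Qed.

End Bridge.


Definition lsum (l : list R) := fold_right Rplus 0 l.

Lemma lsum_app l1 l2 : lsum (l1 ++ l2) = lsum l1 + lsum l2.
Proof. unfold lsum. rewrite fold_right_app. rewrite fold_Rplus_acc. lra. Qed.

Lemma lsum_filter {A} (h : A -> R) (P : A -> bool) l :
  lsum (map h (filter P l)) = lsum (map (fun x => if P x then h x else 0) l).
Proof.
  induction l; simpl; auto. destruct (P a); simpl; unfold lsum in *; simpl; rewrite IHl; lra.
Qed.

Lemma lsum_prod {A B} (h : A * B -> R) l l' :
  lsum (map h (list_prod l l')) = lsum (map (fun x => lsum (map (fun y => h (x, y)) l')) l).
Proof.
  induction l; simpl; auto. rewrite map_app, lsum_app, map_map, IHl. unfold lsum at 3. simpl. reflexivity.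
Qed.

Lemma sumE_eq N b : lsum (edge_weights N b) =
  fsum N (fun i => fsum N (fun k => if Nat.ltb i k then b i k else 0)).
Proof.
  unfold edge_weights, pairs. rewrite lsum_filter, lsum_prod. unfold lsum, fsum. reflexivity.
Qed.

Lemma In_edge N b i k : (i < k)%nat -> (k < N)%nat -> In (b i k) (edge_weights N b).
Proof.
  intros. unfold edge_weights. apply (in_map (fun p => b (fst p) (snd p)) _ (i, k)).
  unfold pairs. apply filter_In. split.
  - apply in_prod; apply in_seq; lia.
  - simpl. apply Nat.ltb_lt. auto.
Qed.

Lemma edge_In N b x : In x (edge_weights N b) -> exists i k, (i < k)%nat /\ (k < N)%nat /\ x = b i k.
Proof.
  unfold edge_weights, pairs. intros H. apply in_map_iff in H. destruct H as [[i k] [E H]].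
  apply filter_In in H. destruct H as [H1 H2]. apply in_prod_iff in H1. destruct H1 as [_ H1].
  apply in_seq in H1. simpl in *. apply Nat.ltb_lt in H2. exists i, k. repeat split; auto; lia.
Qed.

Lemma fold_Rmin_le x l y : In y (x :: l) -> fold_right Rmin x l <= y.
Proof.
  induction l; simpl; intros H.
  - destruct H as [H|[]]. subst; lra.
  - destruct H as [H|[H|H]].
    + subst. pose proof (IHl (or_introl eq_refl)). pose proof (Rmin_r a (fold_right Rmin y l)). lra.
    + subst. apply Rmin_l.
    + pose proof (IHl (or_intror H)). pose proof (Rmin_r a (fold_right Rmin x l)). lra.
Qed.

Lemma fold_Rmin_In x l : In (fold_right Rmin x l) (x :: l).
Proof.
  induction l; simpl; auto.
  destruct (Rle_dec a (fold_right Rmin x l)).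
  - rewrite Rmin_left by auto. right; left; reflexivity.
  - rewrite Rmin_right by lra. destruct IHl as [H|H]; [left; auto|right; right; auto].
Qed.

Section Edges.
Variable N : nat.
Variable b : mat.
Hypothesis HN : (2 <= N)%nat.
Hypothesis bpos : forall i k, (i < N)%nat -> (k < N)%nat -> i <> k -> 0 < b i k.
Hypothesis bsym : forall i k, (i < N)%nat -> (k < N)%nat -> b i k = b k i.

Lemma edges_cons : exists x l, edge_weights N b = x :: l.
Proof.
  pose proof (In_edge N b 0 1 ltac:(lia) ltac:(lia)).
  destruct (edge_weights N b) as [|x l]; [destruct H|]. eauto.
Qed.

Lemma bmin_le i k : (i < N)%nat -> (k < N)%nat -> i <> k -> bmin N b <= b i k.
Proof.
  intros Hi Hk Hik. destruct edges_cons as [x [l E]]. unfold bmin. rewrite E.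
  apply fold_Rmin_le. rewrite <- E.
  destruct (Nat.lt_ge_cases i k).
  - apply In_edge; auto.
  - rewrite bsym by auto. apply In_edge; lia.
Qed.

Lemma bmin_pos : 0 < bmin N b.
Proof.
  destruct edges_cons as [x [l E]]. unfold bmin. rewrite E.
  pose proof (fold_Rmin_In x l) as H. rewrite <- E in H.
  apply edge_In in H. destruct H as [i [k [H1 [H2 H3]]]]. rewrite H3. apply bpos; lia.
Qed.

Lemma bmin_const beta : (forall i k, (i < N)%nat -> (k < N)%nat -> i <> k -> b i k = beta) ->
  bmin N b = beta.
Proof.
  intros Hc. destruct edges_cons as [x [l E]]. unfold bmin. rewrite E.
  pose proof (fold_Rmin_In x l) as H. rewrite <- E in H.
  apply edge_In in H. destruct H as [i [k [H1 [H2 H3]]]]. rewrite H3. apply Hc; lia.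
Qed.

Lemma trace_eq : fsum N (fun i => lap N b i i) = 2 * lsum (edge_weights N b).
Proof.
  rewrite sumE_eq.
  rewrite (fsum_ext N _ (fun i => fsum N (fun k => (if Nat.ltb i k then b i k else 0) + (if Nat.ltb k i then b k i else 0)))).
  - rewrite (fsum_ext N _ (fun i => fsum N (fun k => if Nat.ltb i k then b i k else 0) + fsum N (fun k => if Nat.ltb k i then b k i else 0))).
    2:{ intros. apply fsum_plus. }
    rewrite fsum_plus, (fsum_swap N N (fun i k => if Nat.ltb k i then b k i else 0)). ring.
  - intros i Hi. rewrite lap_diag by lia. apply fsum_ext; intros k Hk. unfold b'.
    destruct (Nat.eqb_spec k i), (Nat.ltb_spec i k), (Nat.ltb_spec k i); try lia.
    + lra.
    + lra.
    + rewrite bsym by auto. lra.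
Qed.

Lemma N_bmean : INR N * bmean N b * (INR N - 1) = 2 * lsum (edge_weights N b).
Proof.
  unfold bmean. fold (lsum (edge_weights N b)).
  assert (2 <= INR N) by (replace 2 with (INR 2) by (simpl; ring); apply le_INR; auto).
  field. lra.
Qed.

End Edges.


Lemma dot_ext N u u' w w' : (forall i, (i < N)%nat -> u i = u' i) -> (forall i, (i < N)%nat -> w i = w' i) ->
  dot N u w = dot N u' w'.
Proof. intros H1 H2. unfold dot. apply fsum_ext; intros. rewrite H1, H2; auto. Qed.
Lemma sm_ext N u u' : (forall i, (i < N)%nat -> u i = u' i) -> sm N u = sm N u'.
Proof. intros H1. unfold sm. apply fsum_ext; auto. Qed.
Lemma Pq_ext N u u' w w' : (forall i, (i < N)%nat -> u i = u' i) -> (forall i, (i < N)%nat -> w i = w' i) ->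
  Pq N u w = Pq N u' w'.
Proof. intros. unfold Pq. rewrite (dot_ext N u u' w w'), (sm_ext N u u'), (sm_ext N w w'); auto. Qed.
Lemma Lv_ext N L u u' i : (forall i, (i < N)%nat -> u i = u' i) -> Lv N L u i = Lv N L u' i.
Proof. intros H. unfold Lv. apply fsum_ext; intros. rewrite H; auto. Qed.
Lemma Lq_ext N L u u' : (forall i, (i < N)%nat -> u i = u' i) -> Lq N L u u = Lq N L u' u'.
Proof. intros. unfold Lq. apply dot_ext; auto. intros. apply Lv_ext; auto. Qed.

Lemma dot_e N s j : (j < N)%nat -> dot N (fun i => s * idm i j) (fun i => s * idm i j) = s * s.
Proof.
  intros. unfold dot. rewrite (fsum_ext N _ (fun i => if Nat.eqb i j then s * s else 0)).
  - apply (fsum_delta' N j (fun _ => s * s)); auto.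
  - intros. unfold idm. destruct (Nat.eqb i j); ring.
Qed.
Lemma sm_e N s j : (j < N)%nat -> sm N (fun i => s * idm i j) = s.
Proof.
  intros. unfold sm. rewrite (fsum_ext N _ (fun i => if Nat.eqb i j then s else 0)).
  - apply (fsum_delta' N j (fun _ => s)); auto.
  - intros. unfold idm. destruct (Nat.eqb i j); ring.
Qed.
Lemma Pq_e N s j : (j < N)%nat -> Pq N (fun i => s * idm i j) (fun i => s * idm i j) = s * s * (1 - 1 / INR N).
Proof.
  intros. unfold Pq. rewrite dot_e, sm_e by auto. assert (0 < INR N) by (apply lt_0_INR; lia).
  field. lra.
Qed.
Lemma Lq_e N L s j : (j < N)%nat -> Lq N L (fun i => s * idm i j) (fun i => s * idm i j) = s * s * L j j.
Proof.
  intros. unfold Lq, dot, Lv.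
  rewrite (fsum_ext N _ (fun i => if Nat.eqb i j then s * s * L j j else 0)).
  - apply (fsum_delta' N j (fun _ => s * s * L j j)); auto.
  - intros i Hi. rewrite (fsum_ext N _ (fun k => if Nat.eqb k j then s * L i j else 0)).
    + rewrite (fsum_delta' N j (fun _ => s * L i j)) by auto. unfold idm.
      destruct (Nat.eqb_spec i j); [subst; ring|ring].
    + intros. unfold idm. destruct (Nat.eqb_spec i0 j); [subst; ring|ring].
Qed.
Lemma Pq_0 N u : (forall i, (i < N)%nat -> u i = 0) -> Pq N u u = 0.
Proof.
  intros. rewrite (Pq_ext N u (fun _ => 0) u (fun _ => 0)) by auto. unfold Pq, dot, sm.
  rewrite (fsum_ext N (fun i => 0 * 0) (fun _ => 0)) by (intros; ring). rewrite fsum_zero. lra.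
Qed.
Lemma Pq_0l N u w : (forall i, (i < N)%nat -> u i = 0) -> Pq N u w = 0.
Proof.
  intros. rewrite (Pq_ext N u (fun _ => 0) w w) by auto. unfold Pq, dot, sm.
  rewrite (fsum_ext N (fun i => 0 * w i) (fun _ => 0)) by (intros; ring). rewrite fsum_zero. lra.
Qed.
Lemma Lq_0 N L u : (forall i, (i < N)%nat -> u i = 0) -> Lq N L u u = 0.
Proof.
  intros. rewrite (Lq_ext N L u (fun _ => 0)) by auto. unfold Lq, dot.
  rewrite (fsum_ext N (fun i => 0 * _) (fun _ => 0)) by (intros; ring). apply fsum_zero.
Qed.

Section Main.
Variable N : nat.
Variable b : mat.
Variables kP tauP kQ tauQ cQ alpha : R.
Variable S : mat.
Variable Phi : R -> mat.
Hypothesis HN : (2 <= N)%nat.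
Hypothesis bpos : forall i k, (i < N)%nat -> (k < N)%nat -> i <> k -> 0 < b i k.
Hypothesis bsym : forall i k, (i < N)%nat -> (k < N)%nat -> b i k = b k i.
Hypothesis HkP : 0 < kP.
Hypothesis HtauP : 0 < tauP.
Hypothesis HkQ : 0 < kQ.
Hypothesis HtauQ : 0 < tauQ.
Hypothesis HcQ : 0 < cQ.
Hypothesis Halpha : 0 < alpha.
Hypothesis Hsq : is_psd_sqrt N S (lap N b).
Hypothesis Htr : is_transition (3 * N) (Asys N b kP tauP kQ tauQ cQ) Phi.

Ltac pos := repeat (first [assumption | match goal with
  | |- 0 < _ * _ => apply Rmult_lt_0_compat
  | |- 0 < _ / _ => apply Rdiv_lt_0_compat
  | |- 0 < _ + _ => apply Rplus_lt_0_compat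
  | |- 0 < _ ^ _ => apply pow_lt
  end]); try assumption; try lra.

Lemma HN1 : (1 <= N)%nat. Proof. lia. Qed.
Local Notation L := (lap N b).
Local Notation D j := (dd N tauP tauQ Phi j).
Local Notation W j := (ww N tauP tauQ Phi j).
Local Notation V j := (vv N tauP tauQ Phi j).
Local Notation a := (kP / tauP).
Local Notation c := (1 / tauP).
Local Notation p := (cQ / tauQ).
Local Notation r := (kQ / tauQ).
Local Notation nu := (INR N * bmin N b).
Local Notation mu := (INR N * bmean N b).
Local Notation k1 := (alpha / (2 * a * c)).
Local Notation k2 := (alpha / (2 * c)).
Local Notation DD := (p + r * mu).
Local Notation y0 := (r * mu ^ 2 / DD ^ 2).
Local Notation y1 := (p / DD ^ 2).
Local Notation z := (alpha / 2 * nu / (p + r * nu)).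

Lemma Ha : 0 < a. Proof. apply Rdiv_lt_0_compat; auto. Qed.
Lemma Hc : 0 < c. Proof. apply Rdiv_lt_0_compat; lra. Qed.
Lemma Hp : 0 < p. Proof. apply Rdiv_lt_0_compat; auto. Qed.
Lemma Hr : 0 < r. Proof. apply Rdiv_lt_0_compat; auto. Qed.
Lemma HNR : 2 <= INR N.
Proof. replace 2 with (INR 2) by (simpl; ring). apply le_INR; auto. Qed.
Lemma Hnu : 0 < nu.
Proof. pose proof HNR. pose proof (bmin_pos N b HN bpos). nra. Qed.

Lemma Lsym' : forall i k, (i < N)%nat -> (k < N)%nat -> L i k = L k i.
Proof. intros. apply lap_sym; auto; lia. Qed.
Lemma Lrow' : forall i, (i < N)%nat -> fsum N (fun k => L i k) = 0.
Proof. intros. apply lap_rowsum; auto; lia. Qed.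

Lemma D1 j : forall t i, (i < N)%nat -> derivable_pt_lim (fun s => D j s i) t (W j t i).
Proof. intros. apply (dd_der N b kP tauP kQ tauQ cQ Phi HN1 Htr). auto. Qed.
Lemma D2 j : forall t i, (i < N)%nat ->
  derivable_pt_lim (fun s => W j s i) t (- a * Lv N L (D j t) i + - c * W j t i).
Proof. intros. apply (ww_der N b kP tauP kQ tauQ cQ Phi HN1 Htr). auto. Qed.
Lemma D3 j : forall t i, (i < N)%nat ->
  derivable_pt_lim (fun s => V j s i) t (- p * V j t i + - r * Lv N L (V j t) i).
Proof. intros. apply (vv_der N b kP tauP kQ tauQ cQ Phi HN1 Htr). auto. Qed.

Definition FP j t := k1 * (c * c * Pd N (D j) t + 2 * c * Pdw N (D j) (W j) t + Pw N (W j) t)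
  + k2 * qd N L (D j) t.
Definition EE j t := a * qd N L (D j) t + Pw N (W j) t.
Definition GY j t := alpha / 2 * (y0 * PV N (V j) t + y1 * qV N L (V j) t).
Definition GZ j t := z * PV N (V j) t.

Ltac dynargs := first [exact HN1 | exact Lsym' | exact Lrow' | apply D1 | apply D2 | apply D3].

Lemma FP_der j t : derivable_pt_lim (FP j) t (- alpha * qd N L (D j) t).
Proof.
  unfold FP. eapply deq.
  - apply dplus; [apply dscal; apply dplus; [apply dplus|]|apply dscal].
    + apply dscal. apply (Pd_der N HN1 (D j) (W j) (D1 j)).
    + apply dscal. apply (Pdw_der N L HN1 Lsym' Lrow' a c (D j) (W j) (D1 j) (D2 j)).
    + apply (Pw_der N L HN1 Lsym' Lrow' a c (D j) (W j) (D2 j)).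
    + apply (qd_der N L Lsym' (D j) (W j) (D1 j)).
  - pose proof Ha. pose proof Hc. field. lra.
Qed.


Lemma EE_der j t : derivable_pt_lim (EE j) t (- 2 * c * Pw N (W j) t).
Proof.
  unfold EE. eapply deq.
  - apply dplus; [apply dscal|].
    + apply (qd_der N L Lsym' (D j) (W j) (D1 j)).
    + apply (Pw_der N L HN1 Lsym' Lrow' a c (D j) (W j) (D2 j)).
  - ring.
Qed.

Lemma PV_der' j t : derivable_pt_lim (PV N (V j)) t (-2 * p * PV N (V j) t - 2 * r * qV N L (V j) t).
Proof. apply (PV_der N L HN1 Lsym' Lrow' p r (V j) (D3 j)). Qed.

Lemma qV_der' j t : derivable_pt_lim (qV N L (V j)) t (-2 * p * qV N L (V j) t - 2 * r * rV N L (V j) t).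
Proof. apply (qV_der N L HN1 Lsym' Lrow' p r (V j) (D3 j)). Qed.

Lemma GY_der j t : derivable_pt_lim (GY j) t
  (alpha / 2 * (y0 * (-2 * p * PV N (V j) t - 2 * r * qV N L (V j) t)
               + y1 * (-2 * p * qV N L (V j) t - 2 * r * rV N L (V j) t))).
Proof.
  unfold GY. apply dscal. apply dplus; apply dscal; [apply PV_der'|apply qV_der'].
Qed.

Lemma GZ_der j t : derivable_pt_lim (GZ j) t (z * (-2 * p * PV N (V j) t - 2 * r * qV N L (V j) t)).
Proof. unfold GZ. apply dscal. apply PV_der'. Qed.

Lemma qd_der' j t : derivable_pt_lim (qd N L (D j)) t (2 * Lq N L (D j t) (W j t)).
Proof. apply (qd_der N L Lsym' (D j) (W j) (D1 j)). Qed.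

Lemma Lq_nn u : 0 <= Lq N L u u.
Proof. apply Lq_nonneg; auto; try lia. intros. apply Rlt_le, bpos; auto. Qed.

Lemma Lq_nu u : nu * Pq N u u <= Lq N L u u.
Proof. apply Lq_lower; auto; try lia. intros. apply bmin_le; auto. Qed.

Lemma Pq_nn u : 0 <= Pq N u u.
Proof. apply Pq_nonneg. exact HN1. Qed.


Lemma Ljj_lower j : (j < N)%nat -> nu * (1 - 1 / INR N) <= L j j.
Proof.
  intros. pose proof (Lq_nu (fun i => 1 * idm i j)). rewrite Pq_e, Lq_e in H0 by auto. lra.
Qed.

Lemma trace_mu : fsum N (fun j => L j j) = (INR N - 1) * mu.
Proof.
  rewrite trace_eq by auto. rewrite <- N_bmean by auto. ring.
Qed.

Lemma Hmu : 0 < mu.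
Proof.
  pose proof HNR. pose proof Hnu.
  assert (fsum N (fun j => nu * (1 - 1 / INR N)) <= fsum N (fun j => L j j)).
  { apply fsum_le. intros. apply Ljj_lower; auto. }
  rewrite fsum_const, trace_mu in H1.
  assert (E : INR N * (nu * (1 - 1 / INR N)) = (INR N - 1) * nu) by (field; lra).
  rewrite E in H1. nra.
Qed.


Lemma HINR : 0 < INR N. Proof. pose proof HNR. lra. Qed.
Lemma Hbmin : 0 < bmin N b. Proof. apply bmin_pos; auto. Qed.
Lemma Hbmean : 0 < bmean N b.
Proof. pose proof Hmu. pose proof HINR. destruct (Rlt_le_dec 0 (bmean N b)); auto. nra. Qed.
Ltac side := pose proof HINR; pose proof Hbmin; pose proof Hbmean; pose proof Ha; pose proof Hc;
  pose proof Hp; pose proof Hr; repeat split; try lra; try nra.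
Ltac fld := field; side.

Lemma HDD : 0 < DD.
Proof. pose proof Hp. pose proof Hr. pose proof Hmu. nra. Qed.

Lemma GY_ineq j t :
  alpha / 2 * (y0 * (-2 * p * PV N (V j) t - 2 * r * qV N L (V j) t)
               + y1 * (-2 * p * qV N L (V j) t - 2 * r * rV N L (V j) t))
  <= - alpha * qV N L (V j) t.
Proof.
  pose proof (Pq_form_nonneg N HN1 (Lv N L (V j t)) (V j t) 1 (- mu)) as HX.
  rewrite (Pq_sym N (Lv N L (V j t)) (V j t)) in HX.
  rewrite (Pq_Lv N L HN1 Lsym' Lrow' (V j t) (V j t)) in HX.
  unfold PV, qV, rV.
  set (PVt := Pq N (V j t) (V j t)) in *.
  set (qVt := Lq N L (V j t) (V j t)) in *.
  set (rVt := Pq N (Lv N L (V j t)) (Lv N L (V j t))) in *.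
  pose proof HDD. pose proof Hr. pose proof Hp.
  assert (E : alpha / 2 * (y0 * (-2 * p * PVt - 2 * r * qVt) + y1 * (-2 * p * qVt - 2 * r * rVt))
     = - alpha * qVt - alpha * r * y1 * (1 * 1 * rVt + 2 * 1 * - mu * qVt + - mu * - mu * PVt)).
  { field. pose proof Hmu. split; nra. }
  rewrite E.
  assert (0 <= alpha * r * y1 * (1 * 1 * rVt + 2 * 1 * - mu * qVt + - mu * - mu * PVt)).
  { apply Rmult_le_pos; auto. apply Rmult_le_pos; [nra|]. apply Rdiv_le_0_compat; [lra|]. nra. }
  lra.
Qed.

Lemma GZ_ineq j t : - alpha * qV N L (V j) t <= z * (-2 * p * PV N (V j) t - 2 * r * qV N L (V j) t).
Proof.
  pose proof (Lq_nu (V j t)) as H. unfold PV, qV.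
  set (PVt := Pq N (V j t) (V j t)) in *.
  set (qVt := Lq N L (V j t) (V j t)) in *.
  pose proof Hnu. pose proof Hr. pose proof Hp.
  assert (0 < p + r * nu) by nra.
  assert (E : z * (-2 * p * PVt - 2 * r * qVt) = - alpha * qVt + alpha * p / (p + r * nu) * (qVt - nu * PVt)).
  { field. pose proof Hnu. split; nra. }
  rewrite E. assert (0 <= alpha * p / (p + r * nu) * (qVt - nu * PVt)).
  { apply Rmult_le_pos; [|lra]. apply Rdiv_le_0_compat; nra. }
  lra.
Qed.

Lemma FP_nn j t : 0 <= FP j t.
Proof.
  unfold FP. pose proof (Pq_form_nonneg N HN1 (D j t) (W j t) c 1).
  pose proof (Lq_nn (D j t)). pose proof Ha. pose proof Hc.
  unfold Pd, Pdw, Pw, qd.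
  apply Rplus_le_le_0_compat; apply Rmult_le_pos.
  - apply Rdiv_le_0_compat; [lra|]. nra.
  - lra.
  - apply Rdiv_le_0_compat; lra.
  - auto.
Qed.

Lemma EE_nn j t : 0 <= EE j t.
Proof.
  unfold EE, qd, Pw. pose proof (Lq_nn (D j t)). pose proof (Pq_nn (W j t)). pose proof Ha. nra.
Qed.

Lemma GY_nn j t : 0 <= GY j t.
Proof.
  unfold GY, PV, qV. pose proof (Lq_nn (V j t)). pose proof (Pq_nn (V j t)).
  pose proof HDD. pose proof Hr. pose proof Hp. pose proof Hmu.
  assert (0 <= y0). { apply Rdiv_le_0_compat; [apply Rmult_le_pos; [lra|apply pow2_ge_0]|apply pow_lt; lra]. }
  assert (0 <= y1). { apply Rdiv_le_0_compat; [lra|apply pow_lt; lra]. }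
  apply Rmult_le_pos; [lra|]. apply Rplus_le_le_0_compat; apply Rmult_le_pos; auto.
Qed.

Lemma GZ_nn j t : 0 <= GZ j t.
Proof.
  unfold GZ, PV. pose proof (Pq_nn (V j t)). pose proof Hnu. pose proof Hr. pose proof Hp.
  assert (0 < z) by pos. apply Rmult_le_pos; lra.
Qed.

Definition K1 := 2 * k1 * c * c / nu + k2 + a.
Definition K2 := 2 * k1 + 1.
Definition Kd := K1 / alpha + K2 / (2 * c).

Lemma K_pos : 0 < Kd.
Proof.
  unfold Kd, K1, K2. pose proof Ha. pose proof Hc. pose proof Hnu.
  pos.
Qed.

Lemma decay_ineq j t : FP j t + EE j t <= Kd * (alpha * qd N L (D j) t + 2 * c * Pw N (W j) t).
Proof.
  pose proof (Pq_form_nonneg N HN1 (D j t) (W j t) c (-1)) as H1.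
  pose proof (Lq_nu (D j t)) as H2. pose proof (Lq_nn (D j t)) as H3. pose proof (Pq_nn (W j t)) as H4.
  unfold FP, EE, Kd, K1, K2, Pd, Pdw, Pw, qd in *.
  set (Pdt := Pq N (D j t) (D j t)) in *.
  set (Pdwt := Pq N (D j t) (W j t)) in *.
  set (Pwt := Pq N (W j t) (W j t)) in *.
  set (qdt := Lq N L (D j t) (D j t)) in *.
  pose proof Ha. pose proof Hc. pose proof Hnu.
  assert (Hk1 : 0 < k1) by (apply Rdiv_lt_0_compat; nra).
  assert (Hk2 : 0 < k2) by (apply Rdiv_lt_0_compat; nra).
  assert (A1 : k1 * (c * c * Pdt + 2 * c * Pdwt + Pwt) <= k1 * (2 * c * c * Pdt + 2 * Pwt)).
  { apply Rmult_le_compat_l; lra. }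
  assert (A2 : 2 * k1 * c * c * Pdt <= 2 * k1 * c * c / nu * qdt).
  { assert (HP : Pdt <= qdt / nu).
    { unfold Rdiv. apply (Rmult_le_reg_l nu); auto. replace (nu * (qdt * / nu)) with qdt by fld. lra. }
    replace (2 * k1 * c * c / nu * qdt) with (2 * k1 * c * c * (qdt / nu)) by fld.
    apply Rmult_le_compat_l; auto. left. pos. }
  assert (E : ((2 * k1 * c * c / nu + k2 + a) / alpha + (2 * k1 + 1) / (2 * c)) *
     (alpha * qdt + 2 * c * Pwt) = (2 * k1 * c * c / nu + k2 + a) * qdt + (2 * k1 + 1) * Pwt
     + ((2 * k1 * c * c / nu + k2 + a) / alpha) * (2 * c * Pwt) + (2 * k1 + 1) / (2 * c) * (alpha * qdt)).
  { fld. }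
  rewrite E.
  assert (0 <= ((2 * k1 * c * c / nu + k2 + a) / alpha) * (2 * c * Pwt)).
  { apply Rmult_le_pos; [left; pos|]. apply Rmult_le_pos; lra. }
  assert (0 <= (2 * k1 + 1) / (2 * c) * (alpha * qdt)).
  { apply Rmult_le_pos; [left; pos|]. apply Rmult_le_pos; lra. }
  lra.
Qed.


Definition Gs t := fsum (2 * N) (fun j => FP j t + EE j t).
Definition Us t := fsum (2 * N) (fun j => FP j t + GY j t).
Definition Ls t := fsum (2 * N) (fun j => FP j t + GZ j t).
Definition PVs t := fsum (2 * N) (fun j => PV N (V j) t).
Definition gg t := fsum (2 * N) (fun j => alpha * (qd N L (D j) t + qV N L (V j) t)).

Lemma Gs_der t : derivable_pt_lim Gs t
  (fsum (2 * N) (fun j => - alpha * qd N L (D j) t + - 2 * c * Pw N (W j) t)).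
Proof.
  unfold Gs. apply (fsum_derive _ (fun s j => FP j s + EE j s)). intros.
  apply dplus; [apply FP_der|apply EE_der].
Qed.

Lemma Us_der t : derivable_pt_lim Us t
  (fsum (2 * N) (fun j => - alpha * qd N L (D j) t +
    alpha / 2 * (y0 * (-2 * p * PV N (V j) t - 2 * r * qV N L (V j) t)
               + y1 * (-2 * p * qV N L (V j) t - 2 * r * rV N L (V j) t)))).
Proof.
  unfold Us. apply (fsum_derive _ (fun s j => FP j s + GY j s)). intros.
  apply dplus; [apply FP_der|apply GY_der].
Qed.

Lemma Ls_der t : derivable_pt_lim Ls t
  (fsum (2 * N) (fun j => - alpha * qd N L (D j) t +
    z * (-2 * p * PV N (V j) t - 2 * r * qV N L (V j) t))).
Proof.
  unfold Ls. apply (fsum_derive _ (fun s j => FP j s + GZ j s)). intros.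
  apply dplus; [apply FP_der|apply GZ_der].
Qed.

Lemma PVs_der t : derivable_pt_lim PVs t
  (fsum (2 * N) (fun j => -2 * p * PV N (V j) t - 2 * r * qV N L (V j) t)).
Proof.
  unfold PVs. apply (fsum_derive _ (fun s j => PV N (V j) s)). intros. apply PV_der'.
Qed.

Lemma gg_der t : derivable_pt_lim gg t
  (fsum (2 * N) (fun j => alpha * (2 * Lq N L (D j t) (W j t) +
     (-2 * p * qV N L (V j) t - 2 * r * rV N L (V j) t)))).
Proof.
  unfold gg. apply (fsum_derive _ (fun s j => alpha * (qd N L (D j) s + qV N L (V j) s))). intros.
  apply dscal. apply dplus; [apply qd_der'|apply qV_der'].
Qed.

Lemma gg_cont t : continuity_pt gg t.
Proof. apply derivable_continuous_pt. eexists. apply gg_der. Qed.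

Lemma gg_nn t : 0 <= gg t.
Proof.
  unfold gg. apply fsum_nonneg. intros. unfold qd, qV.
  pose proof (Lq_nn (D i t)). pose proof (Lq_nn (V i t)). apply Rmult_le_pos; lra.
Qed.

Lemma Kinv : 0 < / Kd. Proof. apply Rinv_0_lt_compat, K_pos. Qed.

Lemma Gs_decay T : 0 <= T -> Gs T <= Gs 0 * exp (- / Kd * T).
Proof.
  apply (decay Gs _ (/ Kd) Gs_der). intros t _.
  unfold Gs. rewrite Ropp_mult_distr_l_reverse, <- fsum_scal, <- fsum_opp. apply fsum_le. intros j _.
  pose proof (decay_ineq j t). pose proof K_pos.
  assert (E : - (/ Kd * (FP j t + EE j t)) >= - (alpha * qd N L (D j) t + 2 * c * Pw N (W j) t)).
  { apply Ropp_le_ge_contravar. apply (Rmult_le_reg_l Kd); auto.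
    rewrite <- Rmult_assoc, Rinv_r by lra. lra. }
  lra.
Qed.

Lemma PVs_decay T : 0 <= T -> PVs T <= PVs 0 * exp (- (2 * p) * T).
Proof.
  apply (decay PVs _ (2 * p) PVs_der). intros t _.
  unfold PVs. rewrite Ropp_mult_distr_l_reverse, <- fsum_scal, <- fsum_opp. apply fsum_le. intros j _.
  pose proof (Lq_nn (V j t)). unfold qV. pose proof Hr. 
  assert (0 <= 2 * r * Lq N L (V j t) (V j t)) by (apply Rmult_le_pos; lra). lra.
Qed.

Lemma Ls_bound t : Ls t <= Gs t + z * PVs t.
Proof.
  unfold Ls, Gs, PVs. rewrite <- fsum_scal, <- fsum_plus. apply fsum_le. intros j _.
  pose proof (EE_nn j t). unfold GZ. lra.
Qed.


Lemma key1 T : 0 <= T -> RInt gg 0 T <= Us 0.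
Proof.
  intros HT.
  assert (H : forall t, derivable_pt_lim (fun s => Us s + RInt gg 0 s) t
     (fsum (2 * N) (fun j => - alpha * qd N L (D j) t +
    alpha / 2 * (y0 * (-2 * p * PV N (V j) t - 2 * r * qV N L (V j) t)
               + y1 * (-2 * p * qV N L (V j) t - 2 * r * rV N L (V j) t))) + gg t)).
  { intros. apply dplus; [apply Us_der|apply (I_der gg gg_cont)]. }
  pose proof (nonincr _ _ H) as Hm.
  assert (Us T + RInt gg 0 T <= Us 0 + RInt gg 0 0).
  { apply Hm; [|lra]. intros t _. unfold gg. rewrite <- fsum_plus.
    rewrite <- (fsum_zero (2 * N)). apply fsum_le. intros j _.
    pose proof (GY_ineq j t). lra. }
  rewrite I_0 in H0 by apply gg_cont.
  assert (0 <= Us T).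
  { unfold Us. apply fsum_nonneg. intros. pose proof (FP_nn i T). pose proof (GY_nn i T). lra. }
  lra.
Qed.

Lemma key2 T : 0 <= T -> Ls 0 - Ls T <= RInt gg 0 T.
Proof.
  intros HT.
  assert (H : forall t, derivable_pt_lim (fun s => - (Ls s + RInt gg 0 s)) t
     (- (fsum (2 * N) (fun j => - alpha * qd N L (D j) t +
    z * (-2 * p * PV N (V j) t - 2 * r * qV N L (V j) t)) + gg t))).
  { intros. apply derivable_pt_lim_opp. apply dplus; [apply Ls_der|apply (I_der gg gg_cont)]. }
  pose proof (nonincr _ _ H) as Hm.
  assert (- (Ls T + RInt gg 0 T) <= - (Ls 0 + RInt gg 0 0)).
  { apply Hm; [|lra]. intros t _. unfold gg. rewrite <- fsum_plus.
    assert (0 <= fsum (2 * N) (fun j => - alpha * qd N L (D j) t +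
        z * (-2 * p * PV N (V j) t - 2 * r * qV N L (V j) t) +
        alpha * (qd N L (D j) t + qV N L (V j) t))).
    { apply fsum_nonneg. intros j _. pose proof (GZ_ineq j t). lra. }
    lra. }
  rewrite I_0 in H0 by apply gg_cont. lra.
Qed.

Lemma key3 T1 T2 : 0 <= T1 <= T2 -> RInt gg 0 T1 <= RInt gg 0 T2.
Proof.
  intros HT.
  assert (H : forall t, derivable_pt_lim (fun s => - RInt gg 0 s) t (- gg t)).
  { intros. apply derivable_pt_lim_opp. apply (I_der gg gg_cont). }
  assert (Hn : forall t, 0 <= t -> - gg t <= 0). { intros t _. pose proof (gg_nn t). lra. }
  pose proof (nonincr _ _ H Hn T1 T2 HT) as Hm. lra.
Qed.


Lemma col_P j : (j < N)%nat ->
  FP j 0 = k1 * (c * c * (1 - 1 / INR N)) /\ GY j 0 = 0 /\ GZ j 0 = 0.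
Proof.
  intros Hj.
  pose proof (fun i Hi => init_P N b kP tauP kQ tauQ cQ Phi HN1 Htr j i Hj Hi) as H.
  assert (Hd : forall i, (i < N)%nat -> D j 0 i = 0) by (intros i Hi; apply H; auto).
  assert (Hw : forall i, (i < N)%nat -> W j 0 i = c * idm i j) by (intros i Hi; apply H; auto).
  assert (Hv : forall i, (i < N)%nat -> V j 0 i = 0) by (intros i Hi; apply H; auto).
  unfold FP, GY, GZ, Pd, Pdw, Pw, qd, PV, qV.
  rewrite (Pq_0 N _ Hd), (Pq_0l N _ _ Hd), (Lq_0 N L _ Hd), (Pq_0 N _ Hv), (Lq_0 N L _ Hv).
  rewrite (Pq_ext N _ (fun i => c * idm i j) _ (fun i => c * idm i j) Hw Hw).
  rewrite Pq_e by auto. split; [ring|split; ring].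
Qed.

Lemma col_Q j : (j < N)%nat ->
  FP (Nat.add N j) 0 = 0 /\ GY (Nat.add N j) 0 = alpha / 2 * (y0 * (1 / tauQ * (1 / tauQ) * (1 - 1 / INR N))
                                 + y1 * (1 / tauQ * (1 / tauQ) * L j j)) /\ GZ (Nat.add N j) 0 = z * (1 / tauQ * (1 / tauQ) * (1 - 1 / INR N)).
Proof.
  intros Hj.
  pose proof (fun i Hi => init_Q N b kP tauP kQ tauQ cQ Phi HN1 Htr j i Hj Hi) as H.
  assert (Hd : forall i, (i < N)%nat -> D (Nat.add N j) 0 i = 0) by (intros i Hi; apply H; auto).
  assert (Hw : forall i, (i < N)%nat -> W (Nat.add N j) 0 i = 0) by (intros i Hi; apply H; auto).
  assert (Hv : forall i, (i < N)%nat -> V (Nat.add N j) 0 i = 1 / tauQ * idm i j) by (intros i Hi; apply H; auto).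
  unfold FP, GY, GZ, Pd, Pdw, Pw, qd, PV, qV.
  rewrite (Pq_0 N _ Hd), (Pq_0l N _ _ Hd), (Lq_0 N L _ Hd), (Pq_0 N _ Hw).
  rewrite (Pq_ext N _ (fun i => 1 / tauQ * idm i j) _ (fun i => 1 / tauQ * idm i j) Hv Hv).
  rewrite (Lq_ext N L _ (fun i => 1 / tauQ * idm i j) Hv).
  rewrite Pq_e, Lq_e by auto. split; [ring|split; ring].
Qed.


Lemma Us0 : Us 0 = alpha / 2 * (INR N - 1) * (1 / kP + 1 / (tauQ * (cQ / (INR N * bmean N b) + kQ))).
Proof.
  unfold Us. rewrite fsum2.
  rewrite (fsum_ext N (fun r0 => FP r0 0 + GY r0 0) (fun _ => k1 * (c * c * (1 - 1 / INR N)))).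
  2:{ intros j Hj. destruct (col_P j Hj) as [E1 [E2 _]]. rewrite E1, E2. ring. }
  rewrite (fsum_ext N (fun r0 => FP (N + r0)%nat 0 + GY (N + r0)%nat 0)
     (fun j => alpha / 2 * (y0 * (1 / tauQ * (1 / tauQ) * (1 - 1 / INR N))) +
               (alpha / 2 * y1 * (1 / tauQ * (1 / tauQ))) * L j j)).
  2:{ intros j Hj. destruct (col_Q j Hj) as [E1 [E2 _]]. rewrite E1, E2. ring. }
  rewrite fsum_plus, !fsum_scal, !fsum_const, trace_mu.
  pose proof HDD. pose proof Hmu. pose proof HNR.
  fld.
Qed.

Lemma Ls0 : Ls 0 = alpha / 2 * (INR N - 1) * (1 / kP + 1 / (tauQ * (cQ / (INR N * bmin N b) + kQ))).
Proof.
  unfold Ls. rewrite fsum2.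
  rewrite (fsum_ext N (fun r0 => FP r0 0 + GZ r0 0) (fun _ => k1 * (c * c * (1 - 1 / INR N)))).
  2:{ intros j Hj. destruct (col_P j Hj) as [E1 [_ E2]]. rewrite E1, E2. ring. }
  rewrite (fsum_ext N (fun r0 => FP (N + r0)%nat 0 + GZ (N + r0)%nat 0)
     (fun j => z * (1 / tauQ * (1 / tauQ) * (1 - 1 / INR N)))).
  2:{ intros j Hj. destruct (col_Q j Hj) as [E1 [_ E2]]. rewrite E1, E2. ring. }
  rewrite !fsum_const.
  pose proof Hnu. pose proof HNR.
  fld.
Qed.


Ltac pos2 := pose proof Hnu; pose proof Hp; pose proof Hr; pose proof HDD; pose proof Hmu; pos.

Lemma main_exists : exists v, has_integral_0_inf gg v /\ Ls 0 <= v <= Us 0.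
Proof.
  set (E := fun y => exists T, 0 <= T /\ y = RInt gg 0 T).
  assert (Hb : bound E).
  { exists (Us 0). intros y [T [HT ->]]. apply key1; auto. }
  assert (Hne : exists y, E y). { exists (RInt gg 0 0). exists 0. split; [lra|auto]. }
  destruct (completeness E Hb Hne) as [v [Hub Hlub]].
  assert (Hle : forall T, 0 <= T -> RInt gg 0 T <= v).
  { intros T HT. apply Hub. exists T. auto. }
  exists v. split; [|split].
  - intros eps Heps.
    assert (Hex : exists T0, 0 <= T0 /\ v - eps < RInt gg 0 T0).
    { apply NNPP. intros Hn.
      assert (v <= v - eps); [|lra].
      apply Hlub. intros y [T [HT ->]].
      destruct (Rle_lt_dec (RInt gg 0 T) (v - eps)); auto.
      exfalso. apply Hn. exists T. auto. }
    destruct Hex as [T0 [HT0 HI]].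
    exists T0. intros T HT.
    destruct (I_riemann gg gg_cont T ltac:(lra)) as [pr Hpr].
    exists pr. rewrite Hpr.
    pose proof (key3 T0 T ltac:(lra)). pose proof (Hle T ltac:(lra)).
    apply Rabs_def1; lra.
  - destruct (Rle_lt_dec (Ls 0) v) as [|Hlt]; auto. exfalso.
    set (eps := Ls 0 - v).
    assert (Heps : 0 < eps / 2) by (unfold eps; lra).
    assert (HG0 : 0 <= Gs 0).
    { unfold Gs. apply fsum_nonneg. intros. pose proof (FP_nn i 0). pose proof (EE_nn i 0). lra. }
    assert (HP0 : 0 <= z * PVs 0).
    { apply Rmult_le_pos; [left; pos2|]. unfold PVs. apply fsum_nonneg. intros. apply Pq_nn. }
    destruct (exp_small (Gs 0) (/ Kd) (eps / 2) HG0 Kinv Heps) as [T1 [HT1 H1]].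
    destruct (exp_small (z * PVs 0) (2 * p) (eps / 2) HP0 ltac:(pose proof Hp; lra) Heps) as [T2 [HT2 H2]].
    set (T := Rmax T1 T2).
    assert (HT1' : T1 <= T) by apply Rmax_l.
    assert (HT2' : T2 <= T) by apply Rmax_r.
    pose proof (key2 T ltac:(lra)).
    pose proof (Ls_bound T).
    pose proof (Gs_decay T ltac:(lra)).
    pose proof (PVs_decay T ltac:(lra)).
    pose proof (H1 T HT1'). pose proof (H2 T HT2').
    pose proof (Hle T ltac:(lra)).
    assert (z * PVs T <= z * PVs 0 * exp (- (2 * p) * T)).
    { rewrite Rmult_assoc. apply Rmult_le_compat_l; [left; pos2|auto]. }
    unfold eps in *. lra.
  - apply Hlub. intros y [T [HT ->]]. apply key1; auto.
Qed.

End Main.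


Lemma bmean_const N b beta : (2 <= N)%nat ->
  (forall i k, (i < N)%nat -> (k < N)%nat -> b i k = b k i) ->
  (forall i k, (i < N)%nat -> (k < N)%nat -> i <> k -> b i k = beta) -> bmean N b = beta.
Proof.
  intros HN bsym Hc.
  pose proof (trace_eq N b HN bsym) as T1. pose proof (N_bmean N b HN) as T2.
  assert (T3 : fsum N (fun i => lap N b i i) = INR N * ((INR N - 1) * beta)).
  { rewrite <- fsum_const. apply fsum_ext. intros i Hi. rewrite lap_diag by auto.
    rewrite (fsum_ext N _ (fun k => beta + - (if Nat.eqb k i then beta else 0))).
    - rewrite fsum_plus, fsum_opp, fsum_const, (fsum_delta' N i (fun _ => beta)) by auto. ring.
    - intros k Hk. unfold b'. destruct (Nat.eqb_spec k i).
      + ring.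
      + rewrite Hc by auto. ring. }
  assert (2 <= INR N) by (replace 2 with (INR 2) by (simpl; ring); apply le_INR; auto).
  rewrite T3, <- T2 in T1.
  apply (Rmult_eq_reg_l (INR N * (INR N - 1))); [|nra]. lra.
Qed.

Theorem theorem3 (N : nat) (b : nat -> nat -> R)
  (kP tauP kQ tauQ bbar alpha : R)
  (S : nat -> nat -> R) (Phi : R -> nat -> nat -> R) :
  (2 <= N)%nat ->
  (forall i k, (i < N)%nat -> (k < N)%nat -> i <> k -> 0 < b i k) ->
  (forall i k, (i < N)%nat -> (k < N)%nat -> b i k = b k i) ->
  0 < kP -> 0 < tauP -> 0 < kQ -> 0 < tauQ -> 0 <= bbar -> 0 < alpha ->
  is_psd_sqrt N S (lap N b) ->
  is_transition (3 * N) (Asys N b kP tauP kQ tauQ (1 + 2 * kQ * bbar)) Phi ->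
  let cQ := 1 + 2 * kQ * bbar in
  let lower := alpha / 2 * (INR N - 1) *
                 (1 / kP + 1 / (tauQ * (cQ / (INR N * bmin N b) + kQ))) in
  let upper := alpha / 2 * (INR N - 1) *
                 (1 / kP + 1 / (tauQ * (cQ / (INR N * bmean N b) + kQ))) in
  exists v,
    H2_norm_sq (3 * N) (2 * N) (2 * N)
      (Asys N b kP tauP kQ tauQ cQ) (Bsys N tauP tauQ) (Csys N alpha S) Phi v /\
    lower <= v <= upper /\
    ((forall i k, (i < N)%nat -> (k < N)%nat -> i <> k -> b i k = b 0%nat 1%nat) ->
       v = lower /\ v = upper).
Proof.
  intros HN bpos bsym HkP HtauP HkQ HtauQ Hbbar Halpha Hsq Htr cQ lower upper.
  assert (HcQ : 0 < cQ) by (unfold cQ; nra).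
  destruct Hsq as [Ssym [_ Ssq]].
  destruct (main_exists N b kP tauP kQ tauQ cQ alpha Phi HN bpos bsym HkP HtauP HkQ HtauQ HcQ Halpha Htr)
    as [v [Hint Hb]].
  rewrite (Ls0 N b kP tauP kQ tauQ cQ alpha Phi HN bpos bsym HkP HtauP HkQ HtauQ HcQ Htr) in Hb.
  rewrite (Us0 N b kP tauP kQ tauQ cQ alpha Phi HN bpos bsym HkP HtauP HkQ HtauQ HcQ Htr) in Hb.
  exists v. split; [|split].
  - unfold H2_norm_sq.
    replace (fun t => fsum (2 * N) (fun i => fsum (2 * N)
        (fun j => impulse (3 * N) (Csys N alpha S) Phi (Bsys N tauP tauQ) t i j ^ 2)))
      with (gg N b tauP tauQ alpha Phi); auto.
    apply functional_extensionality. intros t.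
    rewrite (integrand N b tauP tauQ alpha S Phi ltac:(lra) Ssym Ssq t). reflexivity.
  - exact Hb.
  - intros Hc.
    rewrite (bmin_const N b HN (b 0%nat 1%nat) Hc) in Hb.
    rewrite (bmean_const N b (b 0%nat 1%nat) HN bsym Hc) in Hb.
    unfold lower, upper.
    rewrite (bmin_const N b HN (b 0%nat 1%nat) Hc).
    rewrite (bmean_const N b (b 0%nat 1%nat) HN bsym Hc). lra.
Qed.
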